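(* Let $l\le n$ be positive integers and let $\mathbb F\subseteq\mathbb D_1^n$ be an index set of local height $l$. If $|\mathbb F|<2^l-1$, then there exists an index $(k,j)\in\mathbb D_1^n\setminus\mathbb F$ such that $\mathrm{lh}(\mathbb F\cup\{(k,j)\})=l$.
   Context: Dyadic intervals: $\Delta_k^{(j)}:=[\frac{j-1}{2^k},\frac{j}{2^k})$ for $k\ge0$. Dyadic tree $\mathbb D:=\{(k,j):k\ge1;\ j=1,\dots,2^{k-1}\}$; $\mathbb D_1^n:=\{(k,j):k=1,\dots,n;\ j=1,\dots,2^{k-1}\}$. Branches: $\mathbb B(t):=\{(k,j)\in\mathbb D:t\in\Delta_{k-1}^{(j)}\}$ for $t\in[0,1)$; local height of a finite $\mathbb F\subseteq\mathbb D$: $\mathrm{lh}(\mathbb F):=\max_{t\in[0,1)}|\mathbb F\cap\mathbb B(t)|$. *)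

(* Defs.v *)
From HB Require Import structures.
From mathcomp Require Import all_boot all_order all_algebra.
From mathcomp Require Import finmap.
From mathcomp Require Import reals.
Set Implicit Arguments. Unset Strict Implicit. Unset Printing Implicit Defensive.
Import Order.TTheory GRing.Theory Num.Theory.
Local Open Scope ring_scope.
Local Open Scope fset_scope.

Definition inD1n (n : nat) (p : nat * nat) : bool :=
  [&& (1 <= p.1)%N, (p.1 <= n)%N, (1 <= p.2)%N & (p.2 <= 2 ^ (p.1 - 1))%N].

Definition inD (p : nat * nat) : bool :=
  [&& (1 <= p.1)%N, (1 <= p.2)%N & (p.2 <= 2 ^ (p.1 - 1))%N].

Definition in_dyadic (R : realType) (k j : nat) (t : R) : bool :=
  ((j.-1)%:R / 2 ^+ k <= t) && (t < j%:R / 2 ^+ k).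

Definition in_branch (R : realType) (t : R) (p : nat * nat) : bool :=
  inD p && in_dyadic (p.1 - 1) p.2 t.

Definition branch_count (R : realType) (F : {fset nat * nat}) (t : R) : nat :=
  #|` [fset p in F | in_branch t p] |.

Definition has_local_height (R : realType) (F : {fset nat * nat}) (l : nat) : Prop :=
  (exists t : R, 0 <= t < 1 /\ branch_count F t = l) /\
  (forall t : R, 0 <= t < 1 -> (branch_count F t <= l)%N).

(* Main.v *)
Require Import Defs.
From HB Require Import structures.
From mathcomp Require Import all_boot all_order all_algebra.
From mathcomp Require Import finmap.
From mathcomp Require Import reals.
From mathcomp Require Import zify.
From Stdlib Require Import Classical.
Set Implicit Arguments. Unset Strict Implicit. Unset Printing Implicit Defensive.
Section Comb.
Variable n : nat.
Variable s : seq (nat * nat).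
Hypothesis us : uniq s.

Definition onp m (p : nat * nat) := [&& 1 <= p.1, p.1 <= n & p.2 == m %/ 2 ^ (n - p.1) + 1].
Definition subt k a (p : nat * nat) :=
  [&& k <= p.1, p.1 <= n, 0 < p.2 & (p.2 - 1) %/ 2 ^ (p.1 - k) == a].
Definition cnt k a m := count (fun p => subt k a p && onp m p) s.
Definition cntT k a := count (subt k a) s.

Lemma L1 k a m p : subt k a p -> onp m p -> a = m %/ 2 ^ (n - k).
Proof.
case: p => x y; rewrite /subt /onp /= => /and4P [kx xn y0 /eqP <-] /and3P [_ _ /eqP ->].
rewrite addnK -divnMA -expnD; congr (_ %/ 2 ^ _); lia.
Qed.

Lemma D k a p : k <= n ->
  subt k a p = (p == (k, a.+1)) + subt k.+1 a.*2 p + subt k.+1 a.*2.+1 p :> nat.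
Proof.
move=> kn; case: p => x y; rewrite /subt /= xpair_eqE.
case: (ltngtP x k) => hx /=.
- by [].
- have -> : x - k = (x - k.+1).+1 by lia.
  rewrite expnSr divnMA add0n.
  set q := (y - 1) %/ 2 ^ (x - k.+1).
  case: (x <= n) (0 < y) => [] [] //=.
  have -> : (q %/ 2 == a) = (q == a.*2) || (q == a.*2.+1) by apply/eqP/orP; lia.
  by case: eqP; case: eqP => //; lia.
- subst x; rewrite subnn expn0 divn1 kn /= !addn0.
  by case: (0 < y) / idP => h /=; [congr nat_of_bool; apply/eqP/eqP; lia | case: eqP => //; lia].
Qed.

Lemma count3 (P Q1 Q2 Q3 : pred (nat * nat)) (t : seq (nat * nat)) :
  (forall p, P p = Q1 p + Q2 p + Q3 p :> nat) ->
  count P t = count Q1 t + count Q2 t + count Q3 t.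
Proof. move=> H; elim: t => //= x t ->; rewrite H; lia. Qed.

Lemma subt_root k a : k <= n -> subt k a (k, a.+1).
Proof. by move=> kn; rewrite /subt /= leqnn kn subnn expn0 divn1 subn1 /=. Qed.

Lemma subt_child k a c p : k <= n -> (c = a.*2 \/ c = a.*2.+1) -> subt k.+1 c p -> subt k a p.
Proof.
move=> kn hc h; have := D a p kn; case: hc => <-; case: (subt k a p) => //=; rewrite h; lia.
Qed.

Lemma subt_lt k a p : subt k a p -> k <= n.
Proof. by case/and4P => h1 h2 _ _; apply: leq_trans h1 h2. Qed.

Lemma cnt_empty k a m : n < k -> cnt k a m = 0.
Proof.
move=> h; apply/eqP; rewrite -leqn0 leqNgt -has_count; apply/hasP => -[p _] /andP [/subt_lt]; lia.
Qed.

Lemma cntT_empty k a : n < k -> cntT k a = 0.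
Proof.
move=> h; apply/eqP; rewrite -leqn0 leqNgt -has_count; apply/hasP => -[p _] /subt_lt; lia.
Qed.

Lemma cnt_rec k m : 0 < k -> k <= n ->
  cnt k (m %/ 2 ^ (n - k)) m = ((k, (m %/ 2 ^ (n - k)).+1) \in s) + cnt k.+1 (m %/ 2 ^ (n - k.+1)) m.
Proof.
move=> k0 kn; set a := m %/ 2 ^ (n - k); set c := m %/ 2 ^ (n - k.+1).
rewrite /cnt -(count_uniq_mem _ us) -count_predUI.
rewrite -[LHS]addn0 -(count_pred0 s); congr (_ + _); last first.
  by apply: eq_count => p /=; case: eqP => // ->; rewrite /subt /= ltnn.
apply: eq_count => p /=.
have ron : onp m (k, a.+1) by rewrite /onp /= kn addn1 eqxx k0.
case: (boolP (onp m p)) => hon; last first.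
  by rewrite !andbF orbF; apply/esym/negbTE; apply: contraNN hon => /eqP ->.
rewrite !andbT.
case: (boolP (subt k.+1 c p)) => hc.
  have kn1 := subt_lt hc.
  have hca : c %/ 2 = a by rewrite /c /a -divnMA -expnSr; congr (_ %/ 2 ^ _); lia.
  rewrite orbT; apply: (subt_child kn _ hc); lia.
rewrite orbF; have := D a p kn.
case: (boolP (subt k.+1 a.*2 p)) => h1.
  by have := L1 h1 hon; rewrite -/c => e; rewrite -e h1 in hc.
case: (boolP (subt k.+1 a.*2.+1 p)) => h2.
  by have := L1 h2 hon; rewrite -/c => e; rewrite -e h2 in hc.
by rewrite !addn0; case: (subt k a p); case: (p == _).
Qed.

Lemma cntT_rec k a : k <= n ->
  cntT k a = ((k, a.+1) \in s) + cntT k.+1 a.*2 + cntT k.+1 a.*2.+1.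
Proof.
move=> kn; rewrite /cntT -(count_uniq_mem _ us); apply: count3 => p; exact: D.
Qed.

Lemma depth h : forall k a m, k + h = n.+1 -> 0 < k -> cnt k a m <= h.
Proof.
elim: h => [|h IH] k a m hk k0.
  by rewrite cnt_empty //; lia.
have kn : k <= n by lia.
case: (eqVneq a (m %/ 2 ^ (n - k))) => [-> | ne].
  rewrite cnt_rec //; have := IH k.+1 (m %/ 2 ^ (n - k.+1)) m ltac:(lia) ltac:(lia).
  by case: (_ \in s) => /=; lia.
suff -> : cnt k a m = 0 by [].
apply/eqP; rewrite -leqn0 leqNgt -has_count; apply/hasP => -[p _] /andP [h1 h2].
by have := L1 h1 h2; apply/eqP.
Qed.

Lemma claim h : forall k a l, k + h = n.+1 -> 0 < k -> l <= h ->
  (forall p, p \notin s -> subt k a p -> exists m, onp m p /\ l <= cnt k a m) ->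
  2 ^ l - 1 <= cntT k a.
Proof.
elim: h => [|h IH] k a l hk k0 lh H.
  by have -> : l = 0 by lia.
have kn : k <= n by lia.
rewrite cntT_rec //.
case: (boolP ((k, a.+1) \in s)) => hr.
  case: l lh H => [|l] lh H; first by rewrite expn0.
  have child : forall c, (c = a.*2 \/ c = a.*2.+1) -> 2 ^ l - 1 <= cntT k.+1 c.
    move=> c hc; apply: IH; [lia|lia|lia|].
    move=> p hp hcp; have [m [hm hl]] := H p hp (subt_child kn hc hcp).
    exists m; split => //.
    have ea := L1 (subt_child kn hc hcp) hm; have ec := L1 hcp hm.
    move: hl; rewrite ea cnt_rec // -ea hr -ec /=; lia.
  have := child _ (or_introl erefl); have := child _ (or_intror erefl).
  have := expn_gt0 2 l; rewrite expnS /=; lia.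
have [m [hm hl]] := H _ hr (subt_root a kn).
have ea := L1 (subt_root a kn) hm.
have lh' : l <= h.
  move: hl; rewrite ea cnt_rec // -ea (negbTE hr) /= => hl.
  have := depth (m %/ 2 ^ (n - k.+1)) m (_ : k.+1 + h = n.+1) ltac:(lia); lia.
suff : 2 ^ l - 1 <= cntT k.+1 a.*2 by lia.
apply: IH; [lia|lia|lia|].
move=> p hp hcp; have hc : a.*2 = a.*2 \/ a.*2 = a.*2.+1 by left.
have [m' [hm' hl']] := H p hp (subt_child kn hc hcp).
exists m'; split => //.
have ea' := L1 (subt_child kn hc hcp) hm'; have ec := L1 hcp hm'.
move: hl'; rewrite ea' cnt_rec // -ea' (negbTE hr) -ec /=; lia.
Qed.
End Comb.

Local Open Scope fset_scope.
Lemma card_sep (F : {fset nat * nat}) (P : pred (nat * nat)) :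
  #|` [fset q in F | P q]| = count P F.
Proof.
have -> : [fset q in F | P q] = [fset q in filter P F].
  apply/fsetP => q; rewrite !inE andbC; exact: (esym (mem_filter P q F)).
by rewrite card_fseq undup_id ?filter_uniq ?fset_uniq // size_filter.
Qed.
Lemma bc_U1 (R : realType) (F : {fset nat * nat}) p (t : R) :
  branch_count (p |` F) t = (((p \notin F) && in_branch t p) + branch_count F t)%N.
Proof.
rewrite /branch_count.
case: (boolP (in_branch t p)) => hp.
  have -> : [fset q in p |` F | in_branch t q] = p |` [fset q in F | in_branch t q].
    apply/fsetP => q; rewrite !inE; case: (q =P p) => [->|_] /=; [exact: hp | rewrite /in_mem /=; by []].
  have := cardfsU1 p [fset q in F | in_branch t q]; move=> ->. by rewrite !inE hp !andbT.
rewrite !andbF add0n; congr (size (enum_fset _)).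
apply/fsetP => q; rewrite !inE; case: (q =P p) => [->|_] /=; [by rewrite (negbTE hp) !andbF | rewrite /in_mem /=; by []].
Qed.
Lemma S10 n p : subt n 1 0 p = inD1n n p.
Proof.
case: p => x y; rewrite /subt /inD1n /=.
have -> : ((y - 1) %/ 2 ^ (x - 1) == 0)%N = (y - 1 < 2 ^ (x - 1))%N.
  by rewrite -leqn0 leqNgt leq_divRL ?expn_gt0 // mul1n -ltnNge.
set N := 2 ^ (x - 1).
by apply/idP/idP => /and4P [h1 h2 h3 h4]; apply/and4P; split => //; lia.
Qed.

Local Open Scope ring_scope.
Import Order.TTheory GRing.Theory Num.Theory.

Lemma R1 (R : realType) (t : R) n x y : 0 <= t -> (0 < x)%N -> (x <= n)%N -> (0 < y)%N ->
  in_dyadic (x - 1) y t = onp n (Num.Def.trunc (t * 2 ^+ (n - 1))) (x, y).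
Proof.
move=> t0 x0 xn y0; rewrite /in_dyadic /onp /= x0 xn /=.
set m := Num.Def.trunc _.
have e : (2:R) ^+ (n - 1) = 2 ^+ (x - 1) * 2 ^+ (n - x) by rewrite -exprD; congr (_ ^+ _); lia.
have p1 : 0 < (2:R) ^+ (x - 1) by apply: exprn_gt0.
have p2 : 0 < (2:R) ^+ (n - x) by apply: exprn_gt0.
have t0' : 0 <= t * 2 ^+ (n - 1) by rewrite mulr_ge0 // ltW // exprn_gt0.
rewrite ler_pdivrMr // ltr_pdivlMr //.
rewrite -(ler_pM2r p2) -(ltr_pM2r p2) -!mulrA -e.
have -> : (y.-1)%:R * 2 ^+ (n - x) = ((y.-1 * 2 ^ (n - x))%N)%:R :> R by rewrite natrM natrX.
have -> : y%:R * 2 ^+ (n - x) = ((y * 2 ^ (n - x))%N)%:R :> R by rewrite natrM natrX.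
rewrite -truncn_ge_nat // -truncn_lt_nat // -/m.
rewrite -leq_divRL ?expn_gt0 // -ltn_divLR ?expn_gt0 //.
set q := (m %/ _)%N; rewrite -subn1.
by apply/andP/eqP => [[h1 h2]|->]; lia.
Qed.



Unset Implicit Arguments.
Theorem lemma4p1 (R : realType) (l n : nat) (F : {fset nat * nat}) :
  (0 < l)%N -> (l <= n)%N ->
  (forall p, p \in F -> inD1n n p) ->
  has_local_height R F l ->
  (#|` F | < 2 ^ l - 1)%N ->
  exists p : nat * nat,
    [/\ inD1n n p, p \notin F & has_local_height R (p |` F) l].
Proof.
move=> l0 ln HF [[t0 [t0i ht0]] Hle] Hcard.
apply: NNPP => Hno.
have key : forall p, inD1n n p -> p \notin F -> exists t : R,
    [/\ 0 <= t < 1, in_branch t p & (l <= branch_count F t)%N].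
  move=> p hp hpF; apply: NNPP => Hn; apply: Hno; exists p; split => //.
  have Hle' : forall t : R, 0 <= t < 1 -> (branch_count (p |` F) t <= l)%N.
    move=> t ht; rewrite bc_U1 hpF /=; have := Hle t ht.
    case: (boolP (in_branch t p)) => hb //=.
    case: (ltnP (branch_count F t) l) => // hge _; exfalso; apply: Hn; exists t; split => //.
  split => //; exists t0; split => //; apply/eqP; rewrite eqn_leq Hle' //= bc_U1 ht0 leq_addl //.
have inDD : forall q, inD1n n q -> inD q.
  by case=> x y /and4P [h1 h2 h3 h4]; apply/and3P.
have bcE : forall t : R, 0 <= t ->
    branch_count F t = cnt n F 1 0 (Num.Def.trunc (t * 2 ^+ (n - 1))).
  move=> t t0'; rewrite /branch_count card_sep /cnt; apply: eq_in_count => -[x y] hq.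
  have hq' := HF _ hq; rewrite S10 hq' /= /in_branch inDD //=.
  by case/and4P: hq' => *; apply: R1.
have := @claim n F (fset_uniq F) n 1 0 l ltac:(lia) isT ln.
have cT : cntT n F 1 0 = #|` F|.
  rewrite /cntT -(count_predT F); apply: eq_in_count => q hq; by rewrite S10 HF.
rewrite cT; move=> H; suff : (2 ^ l - 1 <= #|` F|)%N by rewrite leqNgt Hcard.
apply: H => p0 hp hsub; rewrite S10 in hsub.
have [t [/andP [ta tb] hb hl]] := key p0 hsub hp.
exists (Num.Def.trunc (t * 2 ^+ (n - 1))); split; last by rewrite -bcE.
move: hb hsub; case: p0 hp hl => x y _ _; rewrite /in_branch => /andP [_ hd] /and4P [h1 h2 h3 h4].
by rewrite -R1.
Qed.
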